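(* Let $G$ be a group, $\mathfrak g=(g_1,g_2,g_3)$ a string of elements of $G$ and $\mathcal E=\{E_1,E_2,E_3\}$ a partition of $G$ such that $Con(\mathfrak g,\mathcal E)=\{C_1,\dots,C_5\}$ with $C_1=(1,2,3,2)$, $C_2=(1,3,1,3)$, $C_3=(2,1,2,2)$, $C_4=(3,3,1,2)$, $C_5=(3,3,2,1)$. Then $Eq(\mathfrak g,\mathcal E)$ has a normal subsystem, $G$ is non-amenable, and $\tau(G)\le 7$.
   Context: A configuration of $(\mathfrak g,\mathcal E)$ is a tuple $C=(c_0,\dots,c_3)\in\{1,2,3\}^4$ such that some $x\in G$ has $x\in E_{c_0}$ and $g_ix\in E_{c_i}$ for $i=1,2,3$; $Con(\mathfrak g,\mathcal E)$ is the set of all configurations. $Eq(\mathfrak g,\mathcal E)$: variables $f_C$, equations $\sum_{C:\,c_j=i}f_C=\sum_{C:\,c_k=i}f_C$ for all $i$ and $0\le j,k\le 3$, each written $aX=bX$ with $a,b\in\{0,1\}^5$ indicator vectors; a subsystem is a finite list (repetitions allowed, sides may be swapped) of such equations $A_tX=B_tX$, written $(B-A)X=0$. Normality: with $\sum_t(B_t-A_t)$ strictly positive, $T$ the lower triangular all-ones matrix, and $P^+$ the permutation matrix $P$ with rows cyclically shifted up by one, the system is normal if for some permutation matrix $P$ all entries of $TP(B-A)-P^+A$ are integers $\ge-1$. Tarski number $\tau(G)$: minimum of $r+s$ over complete paradoxical decompositions, i.e. partitions $\{A_1,\dots,A_r,B_1,\dots,B_s\}$ of $G$ with $a_i,b_j\in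 G$ such that $\{a_iA_i\}$ and $\{b_jB_j\}$ each partition $G$. *)

(* Defs.v *)
From Stdlib Require Import Reals.
From HB Require Import structures.
From mathcomp Require Import all_boot all_order all_algebra all_fingroup.
Set Implicit Arguments. Unset Strict Implicit. Unset Printing Implicit Defensive.
Import GRing.Theory Num.Theory.

Record AbsGroup := MkGroup {
  gcarrier :> Type;
  gmul : gcarrier -> gcarrier -> gcarrier;
  gone : gcarrier;
  ginv : gcarrier -> gcarrier;
  gmulA : forall x y z, gmul x (gmul y z) = gmul (gmul x y) z;
  gmul1 : forall x, gmul gone x = x;
  gmulV : forall x, gmul (ginv x) x = gone
}.

(* E i is the block E_i (only i = 1,2,3 matter); every x lies in exactly one. *)
Definition is_partition3 (G : AbsGroup) (E : nat -> G -> Prop) : Prop :=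
  forall x : G, exists! i : nat, (1 <= i <= 3)%N /\ E i x.

Definition config := (nat * nat * nat * nat)%type.

Definition comp (C : config) (j : nat) : nat :=
  match j with
  | 0 => C.1.1.1 | 1 => C.1.1.2 | 2 => C.1.2 | _ => C.2 end.

Definition in123 (n : nat) : bool := (1 <= n <= 3)%N.

Definition is_config (G : AbsGroup) (g1 g2 g3 : G) (E : nat -> G -> Prop)
    (C : config) : Prop :=
  [/\ in123 (comp C 0), in123 (comp C 1), in123 (comp C 2) & in123 (comp C 3)] /\
  exists x : G, E (comp C 0) x /\ E (comp C 1) (gmul g1 x) /\
                E (comp C 2) (gmul g2 x) /\ E (comp C 3) (gmul g3 x).

(* With variables indexed by an enumeration cs of Con(g,E), the equation
   sum_{C : c_j = i} f_C = sum_{C : c_k = i} f_C  is  a X = b X  with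
   a = eq_vec cs i j, b = eq_vec cs i k. *)
Definition eq_vec (cs : seq config) (i j : nat) : 'rV[int]_(size cs) :=
  \row_(c < size cs) Posz ((comp (nth (0,0,0,0)%N cs c) j == i) : nat).

(* An equation of Eq(g,E): a triple (i,j,k), i in {1,2,3}, 0 <= j,k <= 3. *)
Definition valid_eq (e : nat * nat * nat) : bool :=
  in123 e.1.1 && (e.1.2 <= 3)%N && (e.2 <= 3)%N.

(* Matrices A (left sides) and B (right sides) of a subsystem given by a
   list of m equations (repetitions allowed; swapping sides = swapping j,k). *)
Definition sysA (cs : seq config) m (es : 'I_m -> nat * nat * nat)
  : 'M[int]_(m, size cs) :=
  \matrix_(t < m, c < size cs) eq_vec cs (es t).1.1 (es t).1.2 ord0 c.
Definition sysB (cs : seq config) m (es : 'I_m -> nat * nat * nat)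
  : 'M[int]_(m, size cs) :=
  \matrix_(t < m, c < size cs) eq_vec cs (es t).1.1 (es t).2 ord0 c.

Definition lowT m : 'M[int]_m := \matrix_(i < m, j < m) Posz ((j <= i)%N : nat).

Definition shift_up m (P : 'M[int]_m) : 'M[int]_m :=
  \matrix_(i < m, j < m) P (ordS i) j.

Definition normal_system m n (A B : 'M[int]_(m, n)) : Prop :=
  (forall c : 'I_n, (0 < \sum_(t < m) (B t c - A t c))%R) /\
  exists s : 'S_m,
    forall (t : 'I_m) (c : 'I_n),
      (-1 <= (lowT m *m perm_mx s *m (B - A) - shift_up (perm_mx s) *m A) t c)%R.

Definition has_normal_subsystem_list (cs : seq config) : Prop :=
  exists (m : nat) (es : 'I_m -> nat * nat * nat),
    (forall t, valid_eq (es t)) /\ normal_system (sysA cs es) (sysB cs es).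

Definition Eq_has_normal_subsystem (G : AbsGroup) (g1 g2 g3 : G)
    (E : nat -> G -> Prop) : Prop :=
  exists cs : seq config, uniq cs /\
    (forall C, is_config g1 g2 g3 E C <-> C \in cs) /\
    has_normal_subsystem_list cs.

Definition translate (G : AbsGroup) (g : G) (A : G -> Prop) : G -> Prop :=
  fun x => A (gmul (ginv g) x).

Definition amenable (G : AbsGroup) : Prop :=
  exists mu : (G -> Prop) -> R,
    (forall A, Rle R0 (mu A)) /\
    mu (fun _ => True) = R1 /\
    (forall A B, (forall x, A x -> B x -> False) ->
       mu (fun x => A x \/ B x) = Rplus (mu A) (mu B)) /\
    (forall g A, mu (translate g A) = mu A).

(* pieces indexed by (false,i) for A_i (i < r) and (true,j) for B_j (j < s) *)
Definition complete_paradoxical (G : AbsGroup) (r s : nat) : Prop :=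
  exists (A B : nat -> G -> Prop) (a b : nat -> G),
    (forall i, (i < r)%N -> exists x, A i x) /\
    (forall j, (j < s)%N -> exists x, B j x) /\
    (forall x : G, exists! p : bool * nat,
        if p.1 then (p.2 < s)%N /\ B p.2 x else (p.2 < r)%N /\ A p.2 x) /\
    (forall y : G, exists! i, (i < r)%N /\ translate (a i) (A i) y) /\
    (forall y : G, exists! j, (j < s)%N /\ translate (b j) (B j) y).

(* tau(G) <= n : the minimum of r+s over complete paradoxical decompositions
   (infinite if there are none) is at most n *)
Definition tarski_le (G : AbsGroup) (n : nat) : Prop :=
  exists r s, (r + s <= n)%N /\ complete_paradoxical G r s.

(* Main.v *)
Require Import Defs.
From Stdlib Require Import Reals Lra FunctionalExtensionality PropExtensionality.
From HB Require Import structures.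
From mathcomp Require Import all_boot all_order all_algebra all_fingroup.
From Stdlib Require Import ClassicalEpsilon.
Set Implicit Arguments. Unset Strict Implicit.
Set Bullet Behavior "Strict Subproofs".
Lemma gmulV' (G : AbsGroup) (x : G) : gmul x (ginv x) = gone G.
Proof.
have e : gmul x (ginv x) = gmul (gmul (ginv (gmul x (ginv x))) (gmul x (ginv x))) (gmul x (ginv x)).
  by rewrite gmulV gmul1.
by rewrite e -!gmulA (gmulA (ginv x) x) gmulV gmul1 gmulV.
Qed.
Lemma gmul1r (G : AbsGroup) (x : G) : gmul x (gone G) = x.
Proof. by rewrite -(gmulV x) gmulA gmulV' gmul1. Qed.
Lemma gKV (G : AbsGroup) (g x : G) : gmul g (gmul (ginv g) x) = x.
Proof. by rewrite gmulA gmulV' gmul1. Qed.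
Lemma gVK (G : AbsGroup) (g x : G) : gmul (ginv g) (gmul g x) = x.
Proof. by rewrite gmulA gmulV gmul1. Qed.
Lemma ginvK (G : AbsGroup) (g : G) : ginv (ginv g) = g.
Proof. by rewrite -(gmul1r (ginv (ginv g))) -(gmulV g) gmulA gmulV gmul1. Qed.
Lemma ginvM (G : AbsGroup) (a b : G) : ginv (gmul a b) = gmul (ginv b) (ginv a).
Proof.
have h : gmul (gmul a b) (gmul (ginv b) (ginv a)) = gone G by rewrite -gmulA gKV gmulV'.
by rewrite -[RHS](gVK (gmul a b)) h gmul1r.
Qed.
Lemma ginv1 (G : AbsGroup) : ginv (gone G) = gone G.
Proof. by rewrite -(gmul1r (ginv _)) gmulV. Qed.

Definition cs0 : seq config := [:: (1,2,3,2); (1,3,1,3); (2,1,2,2); (3,3,1,2); (3,3,2,1)]%N.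
Definition tp (G : AbsGroup) (g1 g2 g3 : G) (d : G -> nat) (x : G) : config :=
  (d x, d (gmul g1 x), d (gmul g2 x), d (gmul g3 x)).
Definition XX (G : AbsGroup) (g1 g2 g3 : G) (d : G -> nat) (k : nat) (x : G) : Prop :=
  tp g1 g2 g3 d x = nth (0,0,0,0)%N cs0 k.
Definition pA (G : AbsGroup) (g1 g2 g3 : G) (d : G -> nat) (n : nat) (z : G) : Prop :=
  let X := XX g1 g2 g3 d in
  match n with
  | 0 => X 2 z /\ (X 0 (gmul (ginv g3) z) \/ X 3 (gmul (ginv g3) z))
  | 1 => X 2 z /\ X 2 (gmul (ginv g3) z) /\ X 2 (gmul (ginv g2) (gmul (ginv g3) z))
         /\ X 4 (gmul (ginv g2) (gmul (ginv g2) (gmul (ginv g3) z)))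
  | 2 => X 4 z /\ X 1 (gmul g3 z)
  | _ => X 4 z /\ X 0 (gmul g3 z)
  end.
Definition pB (G : AbsGroup) (g1 g2 g3 : G) (d : G -> nat) (n : nat) (z : G) : Prop :=
  let X := XX g1 g2 g3 d in
  match n with
  | 0 => X 0 z \/ X 1 z \/ X 3 z
  | 1 => X 2 z /\ X 2 (gmul (ginv g3) z) /\ X 2 (gmul (ginv g2) (gmul (ginv g3) z))
         /\ X 2 (gmul (ginv g2) (gmul (ginv g2) (gmul (ginv g3) z)))
  | _ => X 2 z /\ X 2 (gmul (ginv g3) z) /\ X 4 (gmul (ginv g2) (gmul (ginv g3) z))
  end.
Definition pa (G : AbsGroup) (g1 g2 g3 : G) (n : nat) : G :=
  match n with 0 => ginv g3 | 1 => ginv (gmul g3 (gmul g2 g2)) | 2 => g3 | _ => gmul g1 g3 end.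
Definition pb (G : AbsGroup) (g1 g2 g3 : G) (n : nat) : G :=
  match n with 0 => gone G | 1 => ginv (gmul g3 (gmul g2 g2)) | _ => ginv (gmul g3 g2) end.

Ltac unf := unfold translate, pA, pB, pa, pb, XX, tp in *; simpl in *.
Ltac dec := repeat match goal with
 | H : _ /\ _ |- _ => destruct H
 | H : _ \/ _ |- _ => destruct H
 | H : (_,_,_,_) = (_,_,_,_) |- _ => injection H; clear H; do 4 (let e := fresh "e" in intro e)
 end.
Lemma gmulA' (G : AbsGroup) (x y z : G) : gmul (gmul x y) z = gmul x (gmul y z).
Proof. by rewrite gmulA. Qed.
Lemma gmul1' (G : AbsGroup) (x : G) : gmul (gone G) x = x.
Proof. exact: gmul1. Qed.
Hint Rewrite ginvK ginvM ginv1 gmulA' gKV gVK gmul1' gmul1r : grp.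
Ltac norm := autorewrite with grp in *.
Ltac close := solve [ congruence | split; close | left; close | right; close ].
Definition QA (G : AbsGroup) (g1 g2 g3 : G) (d : G -> nat) (n : nat) (y : G) : Prop :=
  let X := XX g1 g2 g3 d in
  match n with 0 => X 0 y \/ X 3 y | 1 => X 4 y | 2 => X 1 y | _ => X 2 y end.
Definition QB (G : AbsGroup) (g1 g2 g3 : G) (d : G -> nat) (n : nat) (y : G) : Prop :=
  let X := XX g1 g2 g3 d in
  match n with 0 => X 0 y \/ X 1 y \/ X 3 y | 1 => X 2 y | _ => X 4 y end.
Ltac unf2 := unfold translate, QA, QB, pA, pB, pa, pb in *; unfold XX, tp in *; simpl in *.
Ltac go := unf2; dec; norm; try close.
Ltac tryall := first [ exists (true,0%N); solve [go] | exists (true,1%N); solve [go]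
  | exists (true,2%N); solve [go] | exists (false,0%N); solve [go] | exists (false,1%N); solve [go]
  | exists (false,2%N); solve [go] | exists (false,3%N); solve [go] ].
Lemma exu_iff (P Q : nat -> Prop) : (forall i, P i <-> Q i) -> (exists! i, Q i) -> exists! i, P i.
Proof. move=> h [i [Hi Hu]]; exists i; split; first by apply/h. by move=> j /h /Hu. Qed.


Lemma core (G : AbsGroup) (g1 g2 g3 : G) (d : G -> nat)
  (cfP : forall x, tp g1 g2 g3 d x = (1,2,3,2)%N \/ tp g1 g2 g3 d x = (1,3,1,3)%N \/
     tp g1 g2 g3 d x = (2,1,2,2)%N \/ tp g1 g2 g3 d x = (3,3,1,2)%N \/ tp g1 g2 g3 d x = (3,3,2,1)%N)
  (ne : forall k, (k < 5)%N -> exists x, XX g1 g2 g3 d k x) :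
  ~ amenable G /\ tarski_le G 7.
Proof.
have cs : forall t, XX g1 g2 g3 d 0 t \/ XX g1 g2 g3 d 1 t \/ XX g1 g2 g3 d 2 t \/ XX g1 g2 g3 d 3 t \/ XX g1 g2 g3 d 4 t by exact: cfP.
have T1 : forall y, XX g1 g2 g3 d 0 (gmul (ginv g1) y) <-> XX g1 g2 g3 d 2 y.
{ move=> y; split=> H.
  - case: (cs y) => [H1|[H1|[H1|[H1|H1]]]]; go.
  - case: (cs (gmul (ginv g1) y)) => [H1|[H1|[H1|[H1|H1]]]]; go.
}
have T2 : forall y, XX g1 g2 g3 d 2 (gmul (ginv g1) y) <-> XX g1 g2 g3 d 0 y \/ XX g1 g2 g3 d 1 y.
{ move=> y; split=> H.
  - case: (cs y) => [H1|[H1|[H1|[H1|H1]]]]; go.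
  - case: (cs (gmul (ginv g1) y)) => [H1|[H1|[H1|[H1|H1]]]]; go.
}
have T3 : forall y, XX g1 g2 g3 d 2 (gmul (ginv g2) y) \/ XX g1 g2 g3 d 4 (gmul (ginv g2) y) <-> XX g1 g2 g3 d 2 y.
{ move=> y; split=> H.
  - case: (cs y) => [H1|[H1|[H1|[H1|H1]]]]; go.
  - case: (cs (gmul (ginv g2) y)) => [H1|[H1|[H1|[H1|H1]]]]; go.
}
have T4 : forall y, XX g1 g2 g3 d 4 (gmul (ginv g3) y) <-> XX g1 g2 g3 d 0 y \/ XX g1 g2 g3 d 1 y.
{ move=> y; split=> H.
  - case: (cs y) => [H1|[H1|[H1|[H1|H1]]]]; go.
  - case: (cs (gmul (ginv g3) y)) => [H1|[H1|[H1|[H1|H1]]]]; go.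
}
have T5 : forall y, XX g1 g2 g3 d 1 (gmul (ginv g3) y) <-> XX g1 g2 g3 d 3 y \/ XX g1 g2 g3 d 4 y.
{ move=> y; split=> H.
  - case: (cs y) => [H1|[H1|[H1|[H1|H1]]]]; go.
  - case: (cs (gmul (ginv g3) y)) => [H1|[H1|[H1|[H1|H1]]]]; go.
}
split.
  move=> [mu [mu0 [mu1 [madd minv]]]].
  have ext : forall P Q : G -> Prop, (forall y, P y <-> Q y) -> P = Q.
    by move=> P Q h; apply: functional_extensionality => y; apply: propositional_extensionality.
  have e1 : mu (XX g1 g2 g3 d 0) = mu (XX g1 g2 g3 d 2).
    by rewrite -(minv g1 (XX g1 g2 g3 d 0)); congr mu; apply: ext => y; exact: T1.
  have e2 : mu (XX g1 g2 g3 d 2) = Rplus (mu (XX g1 g2 g3 d 0)) (mu (XX g1 g2 g3 d 1)).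
    rewrite -madd; last by move=> x H H'; go.
    by rewrite -(minv g1 (XX g1 g2 g3 d 2)); congr mu; apply: ext => y; exact: T2.
  have e3 : mu (XX g1 g2 g3 d 2) = Rplus (mu (XX g1 g2 g3 d 2)) (mu (XX g1 g2 g3 d 4)).
    rewrite -madd; last by move=> x H H'; go.
    by rewrite -(minv g2 (fun y => XX g1 g2 g3 d 2 y \/ XX g1 g2 g3 d 4 y)); congr mu; apply: ext => y; rewrite -T3.
  have e4 : mu (XX g1 g2 g3 d 4) = Rplus (mu (XX g1 g2 g3 d 0)) (mu (XX g1 g2 g3 d 1)).
    rewrite -madd; last by move=> x H H'; go.
    by rewrite -(minv g3 (XX g1 g2 g3 d 4)); congr mu; apply: ext => y; exact: T4.
  have e5 : mu (XX g1 g2 g3 d 1) = Rplus (mu (XX g1 g2 g3 d 3)) (mu (XX g1 g2 g3 d 4)).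
    rewrite -madd; last by move=> x H H'; go.
    by rewrite -(minv g3 (XX g1 g2 g3 d 1)); congr mu; apply: ext => y; exact: T5.
  have e6 : mu (fun _ => True) = Rplus (mu (XX g1 g2 g3 d 0)) (Rplus (mu (XX g1 g2 g3 d 1)) (Rplus (mu (XX g1 g2 g3 d 2)) (Rplus (mu (XX g1 g2 g3 d 3)) (mu (XX g1 g2 g3 d 4))))).
    rewrite -[in Rplus (mu (XX g1 g2 g3 d 3)) _]madd; last by move=> x H H'; go.
    rewrite -[in Rplus (mu (XX g1 g2 g3 d 2)) _]madd; last by move=> x H H'; go.
    rewrite -[in Rplus (mu (XX g1 g2 g3 d 1)) _]madd; last by move=> x H H'; go.
    rewrite -madd; last by move=> x H H'; go.
    congr mu; apply: ext => y; split=> // _; exact: cs.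
  have := mu0 (XX g1 g2 g3 d 0); have := mu0 (XX g1 g2 g3 d 1); have := mu0 (XX g1 g2 g3 d 2); have := mu0 (XX g1 g2 g3 d 3); have := mu0 (XX g1 g2 g3 d 4).
  lra.
clear T1 T2 T3 T4 T5.
have TA : forall i y, translate (pa g1 g2 g3 i) (pA g1 g2 g3 d i) y <-> QA g1 g2 g3 d i y.
{ move=> i y; case: i => [|[|[|i]]]; split=> H.
  - go.
  - case: (cs (gmul g3 y)) => [H1|[H1|[H1|[H1|H1]]]]; go.
  - go.
  - case: (cs (gmul g2 y)) => [H1|[H1|[H1|[H1|H1]]]]; go;
    case: (cs (gmul g2 (gmul g2 y))) => [H2|[H2|[H2|[H2|H2]]]]; go;
    case: (cs (gmul g3 (gmul g2 (gmul g2 y)))) => [H3|[H3|[H3|[H3|H3]]]]; go.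
  - go.
  - case: (cs (gmul (ginv g3) y)) => [H1|[H1|[H1|[H1|H1]]]]; go.
  - case: (cs y) => [H1|[H1|[H1|[H1|H1]]]]; go.
  - case: (cs (gmul (ginv g1) y)) => [H1|[H1|[H1|[H1|H1]]]]; go;
    case: (cs (gmul (ginv g3) (gmul (ginv g1) y))) => [H2|[H2|[H2|[H2|H2]]]]; go.
}
have TB : forall i y, translate (pb g1 g2 g3 i) (pB g1 g2 g3 d i) y <-> QB g1 g2 g3 d i y.
{ move=> i y; case: i => [|[|i]]; split=> H.
  - go.
  - go.
  - go.
  - case: (cs (gmul g2 y)) => [H1|[H1|[H1|[H1|H1]]]]; go;
    case: (cs (gmul g2 (gmul g2 y))) => [H2|[H2|[H2|[H2|H2]]]]; go;
    case: (cs (gmul g3 (gmul g2 (gmul g2 y)))) => [H3|[H3|[H3|[H3|H3]]]]; go.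
  - go.
  - case: (cs (gmul g2 y)) => [H1|[H1|[H1|[H1|H1]]]]; go;
    case: (cs (gmul g3 (gmul g2 y))) => [H2|[H2|[H2|[H2|H2]]]]; go.
}
exists 4%N, 3%N; split => //.
exists (pA g1 g2 g3 d), (pB g1 g2 g3 d), (pa g1 g2 g3), (pb g1 g2 g3).
split.
  move=> i Hi.
  have [k [Hk Q]] : exists k, (k < 5)%N /\ forall y, XX g1 g2 g3 d k y -> QA g1 g2 g3 d i y.
    case: i Hi => [|[|[|[|i]]]] // _; [exists 0%N|exists 4%N|exists 1%N|exists 2%N]; split=> // y H; go.
  have [w Hw] := ne k Hk.
  exists (gmul (ginv (pa g1 g2 g3 i)) w); exact: (proj2 (TA i w) (Q w Hw)).
split.
  move=> i Hi.
  have [k [Hk Q]] : exists k, (k < 5)%N /\ forall y, XX g1 g2 g3 d k y -> QB g1 g2 g3 d i y.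
    case: i Hi => [|[|[|i]]] // _; [exists 0%N|exists 2%N|exists 4%N]; split=> // y H; go.
  have [w Hw] := ne k Hk.
  exists (gmul (ginv (pb g1 g2 g3 i)) w); exact: (proj2 (TB i w) (Q w Hw)).
split.
{ have U : forall p q x,
    (if p.1 then (p.2 < 3)%N /\ pB g1 g2 g3 d p.2 x else (p.2 < 4)%N /\ pA g1 g2 g3 d p.2 x) ->
    (if q.1 then (q.2 < 3)%N /\ pB g1 g2 g3 d q.2 x else (q.2 < 4)%N /\ pA g1 g2 g3 d q.2 x) -> p = q.
  { move=> [[] n] [[] m] x /= [Hn Hx] [Hm Hy];
    case: n Hn Hx => [|[|[|[|n]]]] //= _ Hx; case: m Hm Hy => [|[|[|[|m]]]] //= _ Hy; go. }
  move=> x.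
  have [p Hp] : exists p : bool * nat,
    (if p.1 then (p.2 < 3)%N /\ pB g1 g2 g3 d p.2 x else (p.2 < 4)%N /\ pA g1 g2 g3 d p.2 x).
  { case: (cs x) => [H1|[H1|[H1|[H1|H1]]]].
    - by exists (true,0%N); go.
    - by exists (true,0%N); go.
    - case: (cs (gmul (ginv g3) x)) => [H2|[H2|[H2|[H2|H2]]]].
      + by exists (false,0%N); go.
      + by go.
      + case: (cs (gmul (ginv g2) (gmul (ginv g3) x))) => [H3|[H3|[H3|[H3|H3]]]].
        * by go.
        * by go.
        * case: (cs (gmul (ginv g2) (gmul (ginv g2) (gmul (ginv g3) x)))) => [H4|[H4|[H4|[H4|H4]]]].
          -- by go.
          -- by go.
          -- by exists (true,1%N); go.
          -- by go.
          -- by exists (false,1%N); go.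
        * by go.
        * by exists (true,2%N); go.
      + by exists (false,0%N); go.
      + by go.
    - by exists (true,0%N); go.
    - case: (cs (gmul g3 x)) => [H2|[H2|[H2|[H2|H2]]]].
      + by exists (false,3%N); go.
      + by exists (false,2%N); go.
      + by go.
      + by go.
      + by go. }
  exists p; split=> // q Hq; exact: U Hp Hq. }
split.
  move=> y; apply: (@exu_iff _ (fun i => (i < 4)%N /\ QA g1 g2 g3 d i y)).
    by move=> i; split=> -[? ?]; split=> //; apply/TA.
  case: (cs y) => [H1|[H1|[H1|[H1|H1]]]];
  [exists 0%N|exists 2%N|exists 3%N|exists 0%N|exists 1%N]; (split; [split; [done|go]|]);
  move=> j [Hj Hq]; case: j Hj Hq => [|[|[|[|j]]]] //= _ Hq; go.
move=> y; apply: (@exu_iff _ (fun i => (i < 3)%N /\ QB g1 g2 g3 d i y)).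
  by move=> i; split=> -[? ?]; split=> //; apply/TB.
case: (cs y) => [H1|[H1|[H1|[H1|H1]]]];
[exists 0%N|exists 0%N|exists 1%N|exists 0%N|exists 2%N]; (split; [split; [done|go]|]);
move=> j [Hj Hq]; case: j Hj Hq => [|[|[|j]]] //= _ Hq; go.
Qed.


Module NormM.
Import GRing.Theory Num.Theory.
Local Open Scope ring_scope.
Definition es0 (t : 'I_4) : nat * nat * nat := nth (0,0,0)%N [:: (1,1,0); (2,1,2); (2,0,3); (2,1,3)]%N t.
Ltac ex4 := rewrite ?(big_ord_recl 3) ?(big_ord_recl 2) ?(big_ord_recl 1) ?(big_ord_recl 0) ?big_ord0.

Lemma norm0 : has_normal_subsystem_list cs0.
Proof.
exists 4%N, es0; split.
  by case=> [[|[|[|[|t]]]] Ht].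
split.
  case=> [[|[|[|[|[|c]]]]] Hc] //; ex4; rewrite /sysA /sysB /eq_vec !mxE; vm_compute; reflexivity.
exists 1%g => t c.
rewrite perm_mx1 mulmx1.
case: t => [[|[|[|[|t]]]] Ht] //; case: c => [[|[|[|[|[|c]]]]] Hc] //;
 rewrite !mxE; ex4; rewrite /sysA /sysB /eq_vec /lowT /shift_up !mxE; vm_compute; reflexivity.
Qed.

End NormM.
Unset Implicit Arguments.

Theorem mainTheorem8 (G : AbsGroup) (g1 g2 g3 : G) (E : nat -> G -> Prop)
  (hE : is_partition3 E)
  (hCon : forall C : config, is_config g1 g2 g3 E C <->
     C \in [:: (1,2,3,2); (1,3,1,3); (2,1,2,2); (3,3,1,2); (3,3,2,1)]%N) :
  Eq_has_normal_subsystem g1 g2 g3 E /\ ~ amenable G /\ tarski_le G 7.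
Proof.
split.
  exists cs0; split; first by [].
  by split; [exact: hCon | exact: NormM.norm0].
pose d x := proj1_sig (constructive_indefinite_description _ (hE x)).
have dP : forall x, (1 <= d x <= 3)%N /\ E (d x) x.
  move=> x; exact: (proj1 (proj2_sig (constructive_indefinite_description _ (hE x)))).
have du : forall x i, (1 <= i <= 3)%N -> E i x -> i = d x.
  move=> x i Hi Ei; symmetry.
  exact: (proj2 (proj2_sig (constructive_indefinite_description _ (hE x))) i (conj Hi Ei)).
have tpin : forall x, tp g1 g2 g3 d x \in cs0.
  move=> x; apply/hCon; split.
    by split; [exact: (proj1 (dP x)) | exact: (proj1 (dP _)) | exact: (proj1 (dP _)) | exact: (proj1 (dP _))].
  exists x; split; [exact: (proj2 (dP x))|split; [exact: (proj2 (dP _))|split; exact: (proj2 (dP _))]].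
have cfP : forall x, tp g1 g2 g3 d x = (1,2,3,2)%N \/ tp g1 g2 g3 d x = (1,3,1,3)%N \/
     tp g1 g2 g3 d x = (2,1,2,2)%N \/ tp g1 g2 g3 d x = (3,3,1,2)%N \/ tp g1 g2 g3 d x = (3,3,2,1)%N.
  move=> x; move: (tpin x); rewrite /cs0 !inE.
  by move=> /orP[/eqP->|/orP[/eqP->|/orP[/eqP->|/orP[/eqP->|/eqP->]]]]; tauto.
have ne : forall k, (k < 5)%N -> exists x, XX g1 g2 g3 d k x.
  move=> k Hk.
  have : is_config g1 g2 g3 E (nth (0,0,0,0)%N cs0 k) by apply/hCon; exact: mem_nth.
  rewrite /XX; case: (nth _ cs0 k) => [[[c0 c1] c2] c3] [[h0 h1 h2 h3] [x [e0 [e1 [e2 e3]]]]].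
  exists x; rewrite /tp.
  by rewrite -(du _ _ h0 e0) -(du _ _ h1 e1) -(du _ _ h2 e2) -(du _ _ h3 e3).
exact: core cfP ne.
Qed.
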